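(* Let $L$ be a principal element lattice and $n\ge1$. The following statements are equivalent: (1) Every proper element of $L$ is a strongly quasi $n$-absorbing element of $L$. (2) For all $a,b\in L$, $a^n=a^nb$ or $a^{n-1}b=a^nb$. (3) For all $a_1,a_2,\dots,a_{n+1}\in L$, $(a_1\wedge a_2\wedge\cdots\wedge a_n)^n\le a_1a_2\cdots a_{n+1}$ or $(a_1\wedge a_2\wedge\cdots\wedge a_n)^{n-1}a_{n+1}\le a_1a_2\cdots a_{n+1}$.
   Context: A multiplicative lattice is a complete lattice $L$ with least element $0$ and compact greatest element $1$, equipped with a commutative, associative product that distributes over arbitrary joins and has $1$ as multiplicative identity. For $x,y\in L$, $(x:y)=\bigvee\{z: zy\le x\}$. An element $e$ is principal if $a\wedge be=((a:e)\wedge b)e$ and $(ae\vee b):e=(b:e)\vee a$ for all $a,b\in L$; a principal element lattice is a multiplicative lattice in which every element is principal. $a^0=1$. A proper element $q$ ($q<1$) is strongly quasi $n$-absorbing if whenever $a,b\in L$ (not necessarily compact) satisfy $a^nb\le q$, then $a^n\le q$ or $a^{n-1}b\le q$. *)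

(* Defs.v *)
From Stdlib Require Import List Arith.

Record MultLattice := {
  carrier :> Type;
  le : carrier -> carrier -> Prop;
  le_refl : forall x, le x x;
  le_trans : forall x y z, le x y -> le y z -> le x z;
  le_antisym : forall x y, le x y -> le y x -> x = y;
  sup : (carrier -> Prop) -> carrier;
  sup_ub : forall (S : carrier -> Prop) x, S x -> le x (sup S);
  sup_least : forall (S : carrier -> Prop) y, (forall x, S x -> le x y) -> le (sup S) y;
  mul : carrier -> carrier -> carrier;
  mulC : forall x y, mul x y = mul y x;
  mulA : forall x y z, mul x (mul y z) = mul (mul x y) z;
  one : carrier;
  one_top : forall x, le x one;
  mul1 : forall x, mul one x = x;
  mul_sup : forall x (S : carrier -> Prop),
      mul x (sup S) = sup (fun y => exists s, S s /\ y = mul x s);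
  one_compact : forall (S : carrier -> Prop), le one (sup S) ->
      exists l : list carrier, (forall x, In x l -> S x) /\
                               le one (sup (fun x => In x l))
}.

Section Ops.
Variable L : MultLattice.

Definition zero : L := sup L (fun _ => False).
Definition join (a b : L) : L := sup L (fun z => z = a \/ z = b).
Definition meet (a b : L) : L := sup L (fun z => le L z a /\ le L z b).
Definition residual (x y : L) : L := sup L (fun z => le L (mul L z y) x).

Fixpoint pow (a : L) (k : nat) : L :=
  match k with O => one L | S k' => mul L a (pow a k') end.

Definition principal (e : L) : Prop :=
  forall a b : L,
    meet a (mul L b e) = mul L (meet (residual a e) b) e /\
    residual (join (mul L a e) b) e = join (residual b e) a.

Definition principal_element_lattice : Prop := forall e : L, principal e.

Definition proper (q : L) : Prop := le L q (one L) /\ q <> one L.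

Definition strongly_quasi_n_absorbing (n : nat) (q : L) : Prop :=
  proper q /\
  forall a b : L, le L (mul L (pow a n) b) q ->
    le L (pow a n) q \/ le L (mul L (pow a (n - 1)) b) q.

(* meet of a 0, ..., a (k-1)  (a_1 /\ ... /\ a_k in 1-based indexing) *)
Definition bigmeet (a : nat -> L) (k : nat) : L :=
  sup L (fun z => forall i, i < k -> le L z (a i)).

Fixpoint bigprod (a : nat -> L) (k : nat) : L :=
  match k with O => one L | S k' => mul L (bigprod a k') (a k') end.

End Ops.

(* Main.v *)
Require Import Defs.
From Stdlib Require Import List Arith Lia Classical.

Section H.
Variable L : MultLattice.

Lemma mul_mono_r (a x y : L) : le L x y -> le L (mul L a x) (mul L a y).
Proof.
  intro Hxy.
  assert (Hs : sup L (fun z => z = x \/ z = y) = y).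
  { apply le_antisym.
    - apply sup_least. intros z [-> | ->]; [exact Hxy | apply le_refl].
    - apply sup_ub. right; reflexivity. }
  apply le_trans with (mul L a (sup L (fun z => z = x \/ z = y))); [|rewrite Hs; apply le_refl]. rewrite mul_sup. apply sup_ub. exists x. split; auto.
Qed.

Lemma mul_mono (a b x y : L) : le L a b -> le L x y -> le L (mul L a x) (mul L b y).
Proof.
  intros H1 H2. apply le_trans with (mul L a y). apply mul_mono_r; auto.
  rewrite (mulC L a y), (mulC L b y). apply mul_mono_r; auto.
Qed.

Lemma mul_le_l (a b : L) : le L (mul L a b) a.
Proof.
  apply le_trans with (mul L a (one L)). apply mul_mono_r, one_top.
  rewrite mulC, mul1. apply le_refl.
Qed.

Lemma pow_pred (a : L) n : 1 <= n -> pow L a n = mul L a (pow L a (n - 1)).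
Proof. destruct n; [lia|]. simpl. now rewrite Nat.sub_0_r. Qed.

Lemma pow_bigprod (c : L) (a : nat -> L) n k : k <= n ->
  (forall i, i < n -> le L c (a i)) -> le L (pow L c k) (bigprod L a k).
Proof.
  intros Hk Hc. induction k; simpl. apply le_refl.
  rewrite mulC. apply mul_mono. apply IHk; lia. apply Hc; lia.
Qed.

Lemma bigprod_const (a b : L) n k : k <= n ->
  bigprod L (fun i => if i <? n then a else b) k = pow L a k.
Proof.
  intros Hk. induction k; simpl; auto.
  rewrite IHk by lia. replace (k <? n) with true by (symmetry; apply Nat.ltb_lt; lia).
  apply mulC.
Qed.
End H.

Theorem mainTheorem14 (L : MultLattice) (n : nat) :
  principal_element_lattice L -> 1 <= n ->
  ((forall q : L, proper L q -> strongly_quasi_n_absorbing L n q) <->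
   (forall a b : L, pow L a n = mul L (pow L a n) b \/
                    mul L (pow L a (n - 1)) b = mul L (pow L a n) b)) /\
  ((forall a b : L, pow L a n = mul L (pow L a n) b \/
                    mul L (pow L a (n - 1)) b = mul L (pow L a n) b) <->
   (forall a : nat -> L,
      le L (pow L (bigmeet L a n) n) (bigprod L a (S n)) \/
      le L (mul L (pow L (bigmeet L a n) (n - 1)) (a n)) (bigprod L a (S n)))).
Proof.
  intros _ Hn.
  assert (Key : forall a b : L, le L (mul L (pow L a n) b) (mul L (pow L a (n - 1)) b)).
  { intros a b. rewrite (pow_pred L a n Hn). rewrite (mulC L a).
    rewrite <- mulA. apply mul_mono_r. rewrite mulC. apply mul_le_l. }
  split; [split|split].
  - intros H1 a b.
    assert (Hle : le L (mul L (pow L a n) b) (pow L a n)) by apply mul_le_l.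
    destruct (classic (mul L (pow L a n) b = one L)) as [E|E].
    + left. rewrite E. apply le_antisym. apply one_top. rewrite <- E. exact Hle.
    + assert (Hp : proper L (mul L (pow L a n) b)) by (split; [apply one_top|exact E]).
      destruct (H1 _ Hp) as [_ H]. destruct (H a b (le_refl _ _)) as [H'|H'].
      * left. apply le_antisym; auto.
      * right. apply le_antisym; auto.
  - intros H2 q Hq. split; auto. intros a b Hab.
    destruct (H2 a b) as [E|E]; [left|right]; rewrite E; auto.
  - intros H2 a. set (c := bigmeet L a n).
    assert (Hc : forall i, i < n -> le L c (a i)).
    { intros i Hi. apply sup_least. intros z Hz. auto. }
    assert (HP : le L (mul L (pow L c n) (a n)) (bigprod L a (S n))).
    { simpl. apply mul_mono. apply (pow_bigprod L c a n n); auto. apply le_refl. }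
    destruct (H2 c (a n)) as [E|E]; [left|right]; rewrite E; auto.
  - intros H3 a b.
    set (f := fun i => if i <? n then a else b).
    assert (Hm : bigmeet L f n = a).
    { apply le_antisym.
      - apply sup_least. intros z Hz. specialize (Hz 0 ltac:(lia)).
        unfold f in Hz. replace (0 <? n) with true in Hz by (symmetry; apply Nat.ltb_lt; lia). auto.
      - apply sup_ub. intros i Hi. unfold f. replace (i <? n) with true by (symmetry; apply Nat.ltb_lt; lia). apply le_refl. }
    assert (HP : bigprod L f (S n) = mul L (pow L a n) b).
    { simpl. unfold f. rewrite (bigprod_const L a b n n) by lia.
      now rewrite Nat.ltb_irrefl. }
    destruct (H3 f) as [E|E]; rewrite Hm, HP in E; [left|right].
    + apply le_antisym; auto. apply mul_le_l.
    + unfold f in E. rewrite Nat.ltb_irrefl in E. apply le_antisym; auto.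
Qed.
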